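(* Let $U$ be a semiunitary space of dimension $n$ whose scalar product has rank $m$, and let $\mathcal A:U\to U$ be a linear operator. The following are equivalent: (a) $\mathcal A$ is bounded, i.e. there exists a positive $c\in\mathbb R$ with $\|\mathcal Au\|\le c\|u\|$ for all $u\in U$; (b) the subspace $U_0=\{u\in U : \langle u,u\rangle=0\}$ is invariant under $\mathcal A$; (c) the matrix of $\mathcal A$ in each $m$-orthonormal basis has the lower block triangular form $\begin{bmatrix}B&0\\C&D\end{bmatrix}$ with $B$ of size $m\times m$.
   Context: A semiunitary space is a finite-dimensional complex vector space $U$ with a positive semidefinite Hermitian form $\langle\cdot,\cdot\rangle$ (semilinear in the first argument, linear in the second). The length of $u$ is $\|u\|=\sqrt{\langle u,u\rangle}$. A basis $e_1,\dots,e_n$ of $U$ is $m$-orthonormal if the Gram matrix $[\langle e_i,e_j\rangle]$ equals $\begin{bmatrix}I_m&0\\0&0\end{bmatrix}$. The matrix of an operator in a basis has as its $j$-th column the coordinate vector of the image of the $j$-th basis vector. *)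

(* Defs.v *)
From HB Require Import structures.
From mathcomp Require Import all_boot all_order all_algebra.
Set Implicit Arguments. Unset Strict Implicit. Unset Printing Implicit Defensive.
Import Order.TTheory GRing.Theory Num.Theory.
Local Open Scope ring_scope.

(* Scalars: an arbitrary numeric algebraically closed field C (the complex
   numbers are an instance); conjugation is z^*, lengths use sqrtC. *)

(* A positive semidefinite Hermitian form on U, linear in the second argument
   (semilinearity in the first follows from Hermitian symmetry). *)
Definition semiunitary_form (C : numClosedFieldType) (U : vectType C)
  (f : U -> U -> C) : Prop :=
  [/\ (forall (u v w : U) (a : C), f u (a *: v + w) = a * f u v + f u w),
      (forall u v : U, f v u = (f u v)^*) &
      (forall u : U, 0 <= f u u)].

Definition slen (C : numClosedFieldType) (U : vectType C)
  (f : U -> U -> C) (u : U) : C := sqrtC (f u u).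

Definition gram (C : numClosedFieldType) (U : vectType C) (f : U -> U -> C)
  (k : nat) (e : k.-tuple U) : 'M[C]_k :=
  \matrix_(i < k, j < k) f (tnth e i) (tnth e j).

Definition form_rank (C : numClosedFieldType) (U : vectType C)
  (f : U -> U -> C) : nat :=
  \rank (gram f (vbasis {:U})).

Definition m_orthonormal (C : numClosedFieldType) (U : vectType C)
  (f : U -> U -> C) (n m : nat) (e : n.-tuple U) : Prop :=
  basis_of fullv e /\
  forall i j : 'I_n,
    f (tnth e i) (tnth e j) = if (i == j) && (i < m)%N then 1 else 0.

Definition op_matrix (C : numClosedFieldType) (U : vectType C) (n : nat)
  (e : n.-tuple U) (A : 'End(U)) : 'M[C]_n :=
  \matrix_(i < n, j < n) coord e i (A (tnth e j)).

Definition bounded_op (C : numClosedFieldType) (U : vectType C)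
  (f : U -> U -> C) (A : 'End(U)) : Prop :=
  exists c : C, [/\ c \is Num.real, 0 < c &
    forall u : U, slen f (A u) <= c * slen f u].

Definition isotropic_part (C : numClosedFieldType) (U : vectType C)
  (f : U -> U -> C) : pred U := [pred u | f u u == 0].

Definition lower_block_triangular (C : numClosedFieldType) (n m : nat)
  (M : 'M[C]_n) : Prop :=
  forall i j : 'I_n, (i < m)%N -> (m <= j)%N -> M i j = 0.

(* Main.v *)
From HB Require Import structures.
From mathcomp Require Import all_boot all_order all_algebra.
From Stdlib Require Import Classical.
Require Import Defs.
Set Implicit Arguments. Unset Strict Implicit. Unset Printing Implicit Defensive.
Import Order.TTheory GRing.Theory Num.Theory.
Local Open Scope ring_scope.

Section Form.
Variables (C : numClosedFieldType) (U : vectType C) (f : U -> U -> C).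
Hypothesis hlin : forall (u v w : U) (a : C), f u (a *: v + w) = a * f u v + f u w.
Hypothesis hherm : forall u v : U, f v u = (f u v)^*.
Hypothesis hpos : forall u : U, 0 <= f u u.

Lemma f0r u : f u 0 = 0.
Proof. by have := hlin u u u (-1); rewrite scaleN1r addNr mulN1r addNr. Qed.
Lemma fDr u v w : f u (v + w) = f u v + f u w.
Proof. by have := hlin u v w 1; rewrite scale1r mul1r. Qed.
Lemma fZr u v a : f u (a *: v) = a * f u v.
Proof. by have := hlin u v 0 a; rewrite addr0 f0r addr0. Qed.
Lemma fDl u v w : f (v + w) u = f v u + f w u.
Proof. by rewrite (hherm u (v+w)) (hherm u v) (hherm u w) fDr rmorphD. Qed.
Lemma fZl u v a : f (a *: v) u = a^* * f v u.
Proof. by rewrite (hherm u (a *: v)) (hherm u v) fZr rmorphM. Qed.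
Lemma fNl u v : f (- v) u = - f v u.
Proof. by rewrite -scaleN1r fZl rmorphN rmorph1 mulN1r. Qed.
Lemma fNr u v : f u (- v) = - f u v.
Proof. by rewrite -scaleN1r fZr mulN1r. Qed.
Lemma fsumr (I : Type) (r : seq I) (P : pred I) (F : I -> U) u :
  f u (\sum_(i <- r | P i) F i) = \sum_(i <- r | P i) f u (F i).
Proof.
elim/big_rec2: _ => [|i y1 y2 _ <-]; first by rewrite f0r.
by rewrite fDr.
Qed.
Lemma fsuml (I : Type) (r : seq I) (P : pred I) (F : I -> U) u :
  f (\sum_(i <- r | P i) F i) u = \sum_(i <- r | P i) f (F i) u.
Proof.
elim/big_rec2: _ => [|i y1 y2 _ <-]; first by rewrite hherm f0r conjC0.
by rewrite fDl.
Qed.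

Definition phi (x : U) : U -> C^o := fun w => f x w.
Lemma phi_linear x : linear (phi x).
Proof. by move=> a u v; rewrite /phi hlin. Qed.
HB.instance Definition _ x := GRing.isLinear.Build C U C^o *:%R (phi x) (phi_linear x).

Lemma phiE x w : linfun (phi x) w = f x w.
Proof. by rewrite lfunE. Qed.


Lemma f_expand n (e : n.-tuple U) u v : basis_of fullv e ->
  f u v = \sum_i \sum_k (coord e i u)^* * coord e k v * f e`_i e`_k.
Proof.
move=> he.
rewrite [in LHS](coord_basis he (memvf u)) [in LHS](coord_basis he (memvf v)) fsuml.
apply: eq_bigr => i _; rewrite fZl fsumr mulr_sumr; apply: eq_bigr => k _.
by rewrite fZr mulrA.
Qed.

Lemma polar v w : f v v = 0 -> f w w = 0 -> f (v + w) (v + w) = 0 ->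
  f (v + 'i *: w) (v + 'i *: w) = 0 -> f v w = 0.
Proof.
move=> hv hw h1 h2.
move: h1 h2; rewrite !fDl !fDr !fZl !fZr hv hw conjCi !addr0 !add0r !mulr0 => h1.
have hb : f w v = - f v w by apply/eqP; rewrite -addr_eq0 addrC h1.
rewrite hb mulrN mulNr opprK addr0 -mulrDr => /eqP; rewrite mulf_eq0 (negbTE (neq0Ci C)) /=.
rewrite -mulr2n -mulr_natr mulf_eq0 pnatr_eq0 orbF => /eqP //.
Qed.


Definition onb_seq (s : seq U) (k : nat) :=
  forall i j, (i < size s)%N -> (j < size s)%N ->
    f s`_i s`_j = if (i == j) && (i < k)%N then 1 else 0.

Lemma iso_case (V : {vspace U}) : ~ (exists v, v \in V /\ f v v != 0) ->
  exists s : seq U, basis_of V s /\ exists k, onb_seq s k.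
Proof.
move=> hno.
have iso v : v \in V -> f v v = 0.
  move=> vV; apply/eqP; apply/negP => /negP h; apply: hno; by exists v.
exists (vbasis V); split; first exact: vbasisP.
exists 0%N => i j hi hj; rewrite ltn0 andbF.
have hv x : x \in vbasis V -> x \in V by apply: vbasis_mem.
have iV := hv _ (mem_nth 0 hi); have jV := hv _ (mem_nth 0 hj).
apply: polar; apply: iso => //; by rewrite ?memvD ?memvZ.
Qed.

Lemma exists_onb d (V : {vspace U}) : (\dim V <= d)%N ->
  exists s : seq U, basis_of V s /\ exists k, onb_seq s k.
Proof.
elim: d V => [|d IH] V hd;
  (case: (classic (exists v, v \in V /\ f v v != 0)) => [[v [vV vnz]]|hno];
   last exact: iso_case).
  suff: v = 0 by move=> v0; move: vnz; rewrite v0 f0r eqxx.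
  have : \dim V == 0%N by rewrite -leqn0.
  by rewrite dimv_eq0 => /eqP V0; move: vV; rewrite V0 memv0 => /eqP.
set a := f v v.
have a0 : 0 < a by rewrite lt_def vnz hpos.
pose e1 := (sqrtC a)^-1 *: v.
have e11 : f e1 e1 = 1.
  rewrite /e1 fZl fZr conj_Creal ?rpredV ?sqrtC_real ?ltW // mulrA -expr2 exprVn sqrtCK.
  by rewrite mulVf // gt_eqF.
have e1V : e1 \in V by rewrite memvZ.
pose V' := (V :&: lker (linfun (phi e1)))%VS.
have memV' w : (w \in V') = (w \in V) && (f e1 w == 0).
  by rewrite memv_cap memv_ker phiE.
have V'V : (V' <= V)%VS by rewrite capvSl.
have ltV : (\dim V' < \dim V)%N.
  rewrite ltn_neqAle dimvS // andbT; apply/negP => /eqP hdim.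
  have : V' == V by rewrite -(dimv_leqif_eq V'V).2 hdim.
  by move=> /eqP hV; move: e1V; rewrite -hV memV' e11 oner_eq0 andbF.
have [s' [bs' [k hk]]] := IH V' (leq_trans (ltV) hd).
have s'V' w : w \in s' -> w \in V'.
  by move=> ws; rewrite -(eqP (andP bs').1); apply: memv_span.
exists (e1 :: s'); split.
  have := bs'; rewrite basisEdim => /andP[_ hs].
  rewrite basisEdim /= (leq_trans _ ltV) ?andbT ?ltnS //.
  apply/subvP => w wV; rewrite span_cons.
  have -> : w = f e1 w *: e1 + (w - f e1 w *: e1) by rewrite addrC subrK.
  apply: memv_add; first by rewrite memvZ ?memv_line.
  rewrite (eqP (andP bs').1) memV' memvB ?memvZ //.
  by rewrite fDr fNr fZr e11 mulr1 subrr eqxx.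
have orth j : (j < size s')%N -> f e1 s'`_j = 0.
  by move=> hj; have := s'V' _ (mem_nth 0 hj); rewrite memV' => /andP[_ /eqP].
exists k.+1 => -[|i] [|j] /= hi hj.
- by rewrite e11.
- exact: orth.
- by rewrite hherm orth // conjC0.
- exact: hk.
Qed.


Lemma gram_change n k (e : n.-tuple U) (b : k.-tuple U) : basis_of fullv e ->
  gram f b = (map_mx Num.conj (\matrix_(i < n, j < k) coord e i (tnth b j)))^T
     *m gram f e *m (\matrix_(i < n, j < k) coord e i (tnth b j)).
Proof.
move=> he; apply/matrixP => j l; rewrite !mxE (f_expand _ _ he).
under [RHS]eq_bigr do rewrite mxE big_distrl /=.
rewrite [RHS]exchange_big /=; apply: eq_bigr => i _; apply: eq_bigr => k' _.
by rewrite !mxE !(tnth_nth 0) mulrAC.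
Qed.

Lemma rank_gram_le n k (e : n.-tuple U) (b : k.-tuple U) : basis_of fullv e ->
  (\rank (gram f b) <= \rank (gram f e))%N.
Proof.
move=> he; rewrite (gram_change b he).
exact: leq_trans (mxrankM_maxl _ _) (mxrankM_maxr _ _).
Qed.


Lemma exists_m_onb n m : \dim {:U} = n -> form_rank f = m ->
  exists e : n.-tuple U, m_orthonormal f m e.
Proof.
move=> hn hm.
have [s [bs [k hk]]] := exists_onb (leqnn (\dim {:U})).
have hsz : size s == n by rewrite -hn (size_basis (X := in_tuple s) bs).
pose e := Tuple hsz.
have be : basis_of fullv e by [].
have ge : forall i j : 'I_n,
    f (tnth e i) (tnth e j) = if (i == j) && (i < k)%N then 1 else 0.
  by move=> i j; rewrite !(tnth_nth 0) /=; apply: hk; rewrite (eqP hsz).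
have gpid : gram f e = pid_mx (minn k n).
  by apply/matrixP => i j; rewrite !mxE ge ltn_min ltn_ord andbT; case: ifP.
have rk : m = minn k n.
  rewrite -hm /form_rank; apply/eqP; rewrite eqn_leq.
  have rkpid : \rank (gram f e) = minn k n by rewrite gpid rank_pid_mx // geq_minr.
  by rewrite -rkpid !rank_gram_le // vbasisP.
by exists e; split => // i j; rewrite ge rk ltn_min ltn_ord andbT.
Qed.


Lemma onb_norm n m (e : n.-tuple U) u : m_orthonormal f m e ->
  f u u = \sum_(i < n) (if (i < m)%N then `|coord e i u| ^+ 2 else 0).
Proof.
move=> [he ho]; rewrite (f_expand _ _ he); apply: eq_bigr => i _.
rewrite (bigD1 i) //= big1 ?addr0.
  rewrite -!(tnth_nth 0) ho eqxx /=; case: ifP => _; last by rewrite mulr0.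
  by rewrite mulr1 normCK mulrC.
move=> k hk; rewrite -!(tnth_nth 0) ho.
by rewrite eq_sym (negbTE hk) /= mulr0.
Qed.

Lemma onb_iso n m (e : n.-tuple U) u : m_orthonormal f m e ->
  (f u u = 0) <-> (forall i : 'I_n, (i < m)%N -> coord e i u = 0).
Proof.
move=> ho; rewrite (onb_norm u ho); split.
  move=> h0 i him.
  have hnn : forall j : 'I_n, true -> 0 <= (if (j < m)%N then `|coord e j u| ^+ 2 else 0).
    by move=> j _; case: ifP => // _; rewrite exprn_ge0.
  have := psumr_eq0P hnn h0 (i:=i) isT.
  by rewrite him => /eqP; rewrite sqrf_eq0 normr_eq0 => /eqP.
move=> h; apply: big1 => i _; case: ifP => // him.
by rewrite h // normr0 expr0n.
Qed.

Lemma coordA n (e : n.-tuple U) (A : 'End(U)) u i : basis_of fullv e ->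
  coord e i (A u) = \sum_j coord e j u * coord e i (A (tnth e j)).
Proof.
move=> he; rewrite {1}(coord_basis he (memvf u)) !linear_sum.
by apply: eq_bigr => j _; rewrite !linearZ /= (tnth_nth 0).
Qed.


Definition inv_iso (A : 'End(U)) :=
  {in isotropic_part f, forall u, A u \in isotropic_part f}.

Lemma inv_lbt n m (A : 'End(U)) : inv_iso A ->
  forall e : n.-tuple U, m_orthonormal f m e -> lower_block_triangular m (op_matrix e A).
Proof.
move=> hinv e ho i j him hmj; rewrite mxE.
have hj : tnth e j \in isotropic_part f by rewrite inE (ho.2 j j) eqxx /= ltnNge hmj.
by have := hinv _ hj; rewrite inE => /eqP /(onb_iso _ ho) h; apply: h.
Qed.

Lemma lbt_inv n m (A : 'End(U)) (e : n.-tuple U) : m_orthonormal f m e ->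
  lower_block_triangular m (op_matrix e A) -> inv_iso A.
Proof.
move=> ho hl u; rewrite !inE => /eqP /(onb_iso _ ho) hu.
apply/eqP/(onb_iso _ ho) => i him.
rewrite (coordA _ _ _ ho.1) big1 // => j _.
case: (ltnP j m) => hjm; first by rewrite hu // mul0r.
by have := hl i j him hjm; rewrite mxE => ->; rewrite mulr0.
Qed.

Lemma bnd_inv (A : 'End(U)) : bounded_op f A -> inv_iso A.
Proof.
move=> [c [_ c0 hc]] u; rewrite !inE => /eqP hu.
have := hc u; rewrite /slen hu sqrtC0 mulr0 => h.
have : sqrtC (f (A u) (A u)) = 0 by apply/eqP; rewrite eq_le h sqrtC_ge0 hpos.
by move/eqP; rewrite sqrtC_eq0.
Qed.

Lemma inv_bnd n m (A : 'End(U)) (e : n.-tuple U) : m_orthonormal f m e ->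
  inv_iso A -> bounded_op f A.
Proof.
move=> ho hinv; have hl := inv_lbt hinv ho.
set M := op_matrix e A.
pose K := \sum_i \sum_j `|M i j|.
have K0 : 0 <= K by apply: sumr_ge0 => i _; apply: sumr_ge0 => j _.
have c0 : 0 < n%:R * K + 1 by rewrite ltr_wpDl // mulr_ge0 // ler0n.
exists (n%:R * K + 1); split => //; first exact: gtr0_real.
move=> u; set r := slen f u.
have r0 : 0 <= r by rewrite sqrtC_ge0 hpos.
have hx (j : 'I_n) : (j < m)%N -> `|coord e j u| <= r.
  move=> hjm; rewrite /r /slen -(sqrCK (normr_ge0 (coord e j u))).
  rewrite ler_sqrtC ?nnegrE ?exprn_ge0 ?hpos //.
  rewrite (onb_norm u ho) (bigD1 j) //= hjm lerDl sumr_ge0 // => k _.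
  by case: ifP => // _; exact: exprn_ge0.
have hy (i : 'I_n) : (i < m)%N -> `|coord e i (A u)| <= K * r.
  move=> him; rewrite (coordA _ _ _ ho.1).
  apply: le_trans (ler_norm_sum _ _ _) _.
  apply: (@le_trans _ _ (\sum_j `|M i j| * r)).
    apply: ler_sum => j _; rewrite normrM mulrC.
    have Mij : M i j = coord e i (A (tnth e j)) by rewrite mxE.
    rewrite -Mij; case: (ltnP j m) => hjm.
      by rewrite ler_wpM2l // hx.
    by rewrite (hl i j him hjm) normr0 !mul0r.
  rewrite -mulr_suml ler_wpM2r //.
  rewrite /K [leRHS](bigD1 i) //= lerDl sumr_ge0 // => k _.
  by apply: sumr_ge0 => j _.
have hf2 : f (A u) (A u) <= ((n%:R * K + 1) * r) ^+ 2.
  rewrite (onb_norm _ ho).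
  apply: (@le_trans _ _ (\sum_(i < n) (K * r) ^+ 2)).
    apply: ler_sum => i _; case: ifP => him; last by rewrite exprn_ge0 // mulr_ge0.
    rewrite ler_pXn2r ?nnegrE ?normr_ge0 ?mulr_ge0 //; exact: hy.
  rewrite sumr_const card_ord -[_ *+ n]mulr_natl.
  apply: (@le_trans _ _ (n%:R ^+ 2 * (K * r) ^+ 2)).
    rewrite ler_pM ?ler0n ?exprn_ge0 ?mulr_ge0 //.
    by rewrite -natrX ler_nat; case: (n) => // n'; rewrite expnS expn1 leq_pmulr.
  rewrite -exprMn mulrA ler_pXn2r ?nnegrE ?mulr_ge0 ?ler0n ?(ltW c0) //.
  by rewrite ler_pM ?mulr_ge0 ?ler0n // lerDl.
rewrite /slen -(sqrCK (x := (n%:R * K + 1) * r)) ?mulr_ge0 ?(ltW c0) //.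
by rewrite ler_sqrtC ?nnegrE ?hpos ?exprn_ge0 ?mulr_ge0 ?(ltW c0).
Qed.

End Form.
Theorem lemma2p1 (C : numClosedFieldType) (U : vectType C) (n m : nat)
  (f : U -> U -> C) (hf : semiunitary_form f)
  (hn : \dim {:U} = n) (hm : form_rank f = m) (A : 'End(U)) :
  (bounded_op f A <->
     {in isotropic_part f, forall u, A u \in isotropic_part f}) /\
  ({in isotropic_part f, forall u, A u \in isotropic_part f} <->
     (forall e : n.-tuple U, m_orthonormal f m e ->
        lower_block_triangular m (op_matrix e A))).
Proof.
have [hlin hherm hpos] := hf.
have [e0 he0] := exists_m_onb hlin hherm hpos hn hm.
split; split.
- exact: bnd_inv.
- by move=> hinv; apply: inv_bnd he0 hinv.
- by move=> hinv e he; apply: inv_lbt.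
- by move=> hl; apply: lbt_inv he0 (hl e0 he0).
Qed.
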